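(* Fix a nonempty $A\subseteq S$ and $w\in A$, and let $E_0=\{\tau_{\mathcal E_N^w}=\tau_{\mathcal E_N(A)}\}$. Let $x,y\in S$ be distinct with $r(x,y)=r(y,x)>0$. Then, as $N\to\infty$, $$\Big|\mathbb P_{\zeta_1^{x,y}}[E_0]-\frac{N-1}{N}\mathbb P_{\xi_N^x}[E_0]-\frac1N\mathbb P_{\xi_N^y}[E_0]\Big|=O(d_N\log N).$$
   Context: $S$ is finite; $r:S\times S\to[0,\infty)$, $r(x,x)=0$, are the rates of an irreducible continuous-time Markov chain on $S$. $\mathcal H_N=\{\eta\in\{0,1,2,\dots\}^S:\sum_x\eta_x=N\}$; $\sigma^{x,y}\eta$ moves one particle from $x$ to $y$ (if $\eta_x\ge1$; else $\sigma^{x,y}\eta=\eta$). With $d_N>0$, $d_N\to0$, the inclusion process is the Markov chain on $\mathcal H_N$ with generator $(\mathcal L_NF)(\eta)=\sum_{x\ne y}\eta_x(d_N+\eta_y)r(x,y)\{F(\sigma^{x,y}\eta)-F(\eta)\}$; $\mathbb P_\eta$ its law from $\eta$; $\tau_{\mathcal C}$ the hitting time of $\mathcal C\subseteq\mathcal H_N$. $\xi_N^z$: all $N$ particles at $z$; $\mathcal E_N^z=\{\xi_N^z\}$, $\mathcal E_N(A)=\bigcup_{z\in A}\mathcal E_N^z$. For $0\le i\le N$, $\zeta_i^{x,y}$ is the configuration with $N-i$ particles at $x$, $i$ at $y$, none elsewhere. $O(\cdot)$ has constant independent of $N$. *)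

(* Defs.v *)
From HB Require Import structures.
From mathcomp Require Import all_boot all_order all_algebra.
From mathcomp Require Import all_classical all_reals all_analysis.
Set Implicit Arguments. Unset Strict Implicit. Unset Printing Implicit Defensive.
Import Order.TTheory GRing.Theory Num.Theory numFieldNormedType.Exports.
Local Open Scope ring_scope.

Section InclusionProcess.
Variables (R : realType) (S : finType).

Definition config := {ffun S -> nat}.

Definition xi (N : nat) (z : S) : config := [ffun s => if s == z then N else 0%N].

Definition zeta (N i : nat) (x y : S) : config :=
  [ffun s => if s == x then (N - i)%N else if s == y then i else 0%N].

Definition sigma (x y : S) (eta : config) : config :=
  if (0 < eta x)%N then [ffun s => (eta s - (s == x) + (s == y))%N] else eta.

Definition inE_N (N : nat) (A : {set S}) (eta : config) : bool :=
  [exists z in A, eta == xi N z].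

Definition rate (dN : R) (r : S -> S -> R) (eta : config) (x y : S) : R :=
  if x != y then (eta x)%:R * (dN + (eta y)%:R) * r x y else 0.

Definition total_rate (dN : R) (r : S -> S -> R) (eta : config) : R :=
  \sum_(p : S * S) rate dN r eta p.1 p.2.

(* hitN n eta = P_eta[ the (jump chain of the) process hits E_N(A) within
   n jumps, and the first configuration of E_N(A) visited is xi_N^w ] *)
Fixpoint hitN (N : nat) (dN : R) (r : S -> S -> R) (A : {set S}) (w : S)
    (n : nat) (eta : config) : R :=
  if inE_N N A eta then (eta == xi N w)%:R
  else match n with
       | 0 => 0
       | n'.+1 =>
         if total_rate dN r eta == 0 then 0
         else \sum_(p : S * S)
                (rate dN r eta p.1 p.2 / total_rate dN r eta) *
                hitN N dN r A w n' (sigma p.1 p.2 eta)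
       end.

(* P_eta[ tau_{E_N^w} = tau_{E_N(A)} ] for the inclusion process with
   parameter d_N = dN (limit as n -> oo of the above) *)
Definition probE0 (N : nat) (dN : R) (r : S -> S -> R) (A : {set S}) (w : S)
    (eta : config) : R :=
  limn (fun n => hitN N dN r A w n eta).

Definition irreducible (r : S -> S -> R) : Prop :=
  forall x y : S, connect [rel a b | 0 < r a b] x y.

End InclusionProcess.

(* Main.v *)
Require Import Defs.
From HB Require Import structures.
From mathcomp Require Import all_boot all_order all_algebra.
From mathcomp Require Import all_classical all_reals all_analysis.
From mathcomp Require Import lra zify ring.
Import Order.TTheory GRing.Theory Num.Theory numFieldNormedType.Exports.
Local Open Scope classical_set_scope.
Local Open Scope ring_scope.


Section PartA.
Variables (R : realType) (S : finType) (r : S -> S -> R).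
Hypothesis r_ge0 : forall a b : S, 0 <= r a b.
Variables (N : nat) (dN : R) (A : {set S}) (w : S).
Hypothesis dN_pos : 0 < dN.

Local Notation h := (hitN N dN r A w).

Lemma wM2l (z x y : R) : 0 <= z -> x <= y -> z * x <= z * y.
Proof. move=> z0 xy; have h : 0 <= y - x by rewrite subr_ge0.
have := mulr_ge0 z0 h; lra. Qed.

Lemma rate_ge0 eta a b : 0 <= rate dN r eta a b.
Proof.
rewrite /rate; case: ifP => // _.
by rewrite mulr_ge0 // mulr_ge0 // addr_ge0 // ltW.
Qed.

Lemma total_ge0 eta : 0 <= total_rate dN r eta.
Proof. by apply: sumr_ge0 => p _; apply: rate_ge0. Qed.

Lemma sum_coef eta : total_rate dN r eta != 0 ->
  \sum_(p : S * S) (rate dN r eta p.1 p.2 / total_rate dN r eta) = 1.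
Proof. by move=> T0; rewrite -mulr_suml divff. Qed.

Lemma bool01 (b : bool) : 0 <= (b%:R : R) <= 1.
Proof. by case: b; rewrite /= ?lexx ?ler01. Qed.

Lemma hit_bounds n eta : 0 <= h n eta <= 1.
Proof.
elim: n eta => [|n IH] eta /=.
  by case: ifP => _; rewrite ?bool01 // lexx ler01.
case: ifP => _; first exact: bool01.
case: ifP => [_|/negbT T0]; first by rewrite lexx ler01.
apply/andP; split.
  apply: sumr_ge0 => p _; apply: mulr_ge0; last by case/andP: (IH (sigma p.1 p.2 eta)).
  by apply: divr_ge0; [apply: rate_ge0 | apply: total_ge0].
rewrite -(sum_coef _ T0); apply: ler_sum => p _.
rewrite -[X in _ <= X]mulr1; apply: ler_wpM2l; last by case/andP: (IH (sigma p.1 p.2 eta)).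
by apply: divr_ge0; [apply: rate_ge0 | apply: total_ge0].
Qed.

Lemma hit_mono n eta : h n eta <= h n.+1 eta.
Proof.
elim: n eta => [|n IH] eta.
  rewrite [h 0 eta]/=; case: ifP => E.
    by rewrite /= E.
  by case/andP: (hit_bounds 1 eta).
rewrite /=; case: ifP => // _; case: ifP => // _.
apply: ler_sum => p _; apply: ler_wpM2l; last exact: IH.
by apply: divr_ge0; [apply: rate_ge0 | apply: total_ge0].
Qed.

Lemma hit_cvg eta : (fun n => h n eta) @ \oo --> probE0 N dN r A w eta.
Proof.
have nd : nondecreasing_seq (fun n => h n eta).
  by apply/nondecreasing_seqP => n; apply: hit_mono.
have ub : has_ubound (range (fun n => h n eta)).
  by exists 1 => _ [n _ <-]; case/andP: (hit_bounds n eta).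
have := nondecreasing_is_cvgn nd ub.
by move=> /cvg_ex [l Hl]; rewrite /probE0 (cvg_lim _ Hl).
Qed.


Local Notation f := (probE0 N dN r A w).

Lemma f_bounds eta : 0 <= f eta <= 1.
Proof.
have H := hit_cvg eta.
apply/andP; split.
  apply: limr_ge; first exact: cvgP H.
  by apply: nearW => n; case/andP: (hit_bounds n eta).
apply: limr_le; first exact: cvgP H.
by apply: nearW => n; case/andP: (hit_bounds n eta).
Qed.

Lemma f_in eta : inE_N N A eta -> f eta = (eta == xi N w)%:R.
Proof.
move=> E; apply: (cvg_lim _ _); first by [].
have -> : (fun n => h n eta) = (fun=> (eta == xi N w)%:R).
  by apply: funext => -[|n] /=; rewrite E.
exact: cvg_cst.
Qed.

Lemma f_harm eta : ~~ inE_N N A eta -> total_rate dN r eta != 0 ->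
  f eta = \sum_(p : S * S) (rate dN r eta p.1 p.2 / total_rate dN r eta) * f (sigma p.1 p.2 eta).
Proof.
move=> nE T0.
have H1 : (fun n => h n.+1 eta) @ \oo --> f eta.
  by have := hit_cvg eta; rewrite -cvg_shiftS.
have H2 : (fun n => h n.+1 eta) = (fun n => \sum_(p : S * S)
   (rate dN r eta p.1 p.2 / total_rate dN r eta) * h n (sigma p.1 p.2 eta)).
  by apply: funext => n /=; rewrite (negbTE nE) (negbTE T0).
have H3 : (fun n => \sum_(p : S * S)
   (rate dN r eta p.1 p.2 / total_rate dN r eta) * h n (sigma p.1 p.2 eta)) @ \oo -->
   \sum_(p : S * S) (rate dN r eta p.1 p.2 / total_rate dN r eta) * f (sigma p.1 p.2 eta).
  apply: cvg_big => //; first exact: add_continuous.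
  by move=> p _; apply: cvgMl_tmp; apply: hit_cvg.
rewrite H2 in H1; exact: (cvg_unique _ H1 H3).
Qed.


Variables (x y : S).
Hypothesis xy : x != y.

Lemma yx_false : (y == x) = false.
Proof. by rewrite eq_sym (negbTE xy). Qed.

Lemma zeta0 : zeta N 0 x y = xi N x.
Proof.
apply/ffunP => s; rewrite !ffunE subn0.
by case: (eqVneq s x) => // _; case: (s == y).
Qed.

Lemma zetaN : zeta N N x y = xi N y.
Proof.
apply/ffunP => s; rewrite !ffunE subnn.
case: (eqVneq s x) => [->|//]; by rewrite (negbTE xy).
Qed.

Lemma zeta_x i : zeta N i x y x = (N - i)%N.
Proof. by rewrite ffunE eqxx. Qed.

Lemma zeta_y i : zeta N i x y y = i.
Proof. by rewrite ffunE yx_false eqxx. Qed.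

Lemma zeta_o i s : s != x -> s != y -> zeta N i x y s = 0%N.
Proof. by move=> sx sy; rewrite ffunE (negbTE sx) (negbTE sy). Qed.

Lemma zeta_notE i : (0 < i < N)%N -> ~~ inE_N N A (zeta N i x y).
Proof.
case/andP=> i0 iN; apply/existsP => -[z /andP[_ /eqP E]].
have Ex := congr1 (fun e : config S => e x) E; have Ey := congr1 (fun e : config S => e y) E.
rewrite /= zeta_x zeta_y !ffunE in Ex Ey.
case: (eqVneq x z) Ex Ey => [<-|xz].
  by rewrite yx_false => _ Ey; rewrite Ey in i0.
by move=> Ex; move: iN; rewrite -subn_gt0 Ex.
Qed.

Lemma sigma_xy i : (i < N)%N -> sigma x y (zeta N i x y) = zeta N i.+1 x y.
Proof.
move=> iN; rewrite /sigma zeta_x subn_gt0 iN.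
apply/ffunP => s; rewrite !ffunE.
case: (eqVneq s x) => [->|sx]; first by rewrite (negbTE xy) /=; lia.
case: (eqVneq s y) => [_|sy] /=; lia.
Qed.

Lemma sigma_yx i : (0 < i)%N -> (i <= N)%N -> sigma y x (zeta N i x y) = zeta N i.-1 x y.
Proof.
move=> i0 iN; rewrite /sigma zeta_y i0.
apply/ffunP => s; rewrite !ffunE.
case: (eqVneq s x) => [->|sx]; first by rewrite (negbTE xy) /=; lia.
case: (eqVneq s y) => [_|sy] /=; lia.
Qed.

Lemma rate_other i (p : S * S) : (i <= N)%N -> p != (x, y) -> p != (y, x) ->
  rate dN r (zeta N i x y) p.1 p.2 <= N%:R * dN * r p.1 p.2.
Proof.
have Nd0 : 0 <= N%:R * dN by rewrite mulr_ge0 ?ler0n ?ltW.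
case: p => a b /= iN H1 H2; rewrite /rate.
case: ifP => ab; last by rewrite mulr_ge0.
case: (eqVneq a x) => [ea|ax].
  subst a.
  have bx : b != x by rewrite eq_sym.
  have bxy : b != y by apply: contra H1 => /eqP ->.
  rewrite zeta_x zeta_o // addr0; apply: ler_wpM2r => //.
  by apply: ler_wpM2r; [exact: ltW | rewrite ler_nat leq_subr].
case: (eqVneq a y) => [ea|ay].
  subst a.
  have bx : b != x by apply: contra H2 => /eqP ->.
  have bxy : b != y by rewrite eq_sym.
  rewrite zeta_y zeta_o // addr0; apply: ler_wpM2r => //.
  by apply: ler_wpM2r; [exact: ltW | rewrite ler_nat].
by rewrite zeta_o // mul0r mul0r mulr_ge0.
Qed.


Hypothesis rsym : r x y = r y x.
Hypothesis rpos : 0 < r x y.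

Lemma f_diff_le1 a b : `|f a - f b| <= 1.
Proof.
case/andP: (f_bounds a) => ? ?; case/andP: (f_bounds b) => ? ?.
rewrite ler_norml; apply/andP; split; lra.
Qed.

Lemma seg_eq i : (0 < i < N)%N ->
  `| ((N-i)%:R * (dN + i%:R) * r x y) * (f (zeta N i.+1 x y) - f (zeta N i x y))
     + (i%:R * (dN + (N-i)%:R) * r x y) * (f (zeta N i.-1 x y) - f (zeta N i x y)) |
   <= N%:R * dN * \sum_(p : S * S) r p.1 p.2.
Proof.
move=> /andP[i0 iN].
set eta := zeta N i x y.
have rxy : rate dN r eta x y = (N-i)%:R * (dN + i%:R) * r x y.
  by rewrite /rate xy zeta_x zeta_y.
have ryx : rate dN r eta y x = i%:R * (dN + (N-i)%:R) * r x y.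
  by rewrite /rate eq_sym xy zeta_x zeta_y rsym.
have uxy : 0 < rate dN r eta x y.
  by rewrite rxy !mulr_gt0 // ?ltr0n ?subn_gt0 // ltr_wpDr // ltW.
have T0 : 0 < total_rate dN r eta.
  rewrite /total_rate (bigD1 (x, y)) //=.
  apply: (lt_le_trans uxy); rewrite lerDl.
  by apply: sumr_ge0 => p _; apply: rate_ge0.
pose E (p : S * S) := rate dN r eta p.1 p.2 * (f (sigma p.1 p.2 eta) - f eta).
have sumE : \sum_p E p = 0.
  have nE : ~~ inE_N N A eta by apply: zeta_notE; rewrite i0 iN.
  have h := f_harm eta nE (lt0r_neq0 T0).
  have h' : \sum_p rate dN r eta p.1 p.2 * f (sigma p.1 p.2 eta) = f eta * total_rate dN r eta.
    rewrite h; under [X in _ = X * _]eq_bigr do rewrite mulrAC.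
    by rewrite -mulr_suml divfK // lt0r_neq0.
  rewrite /E; under eq_bigr do rewrite mulrBr.
  rewrite sumrB h' -mulr_suml.
  by rewrite /total_rate mulrC subrr.
have yxne : (y, x) != (x, y).
  by apply/eqP => -[e _]; move: xy; rewrite e eqxx.
rewrite (bigD1 (x, y)) //= (bigD1 (y, x)) //= in sumE.
have eq1 : E (x, y) + E (y, x) = - \sum_(p | (p != (x, y)) && (p != (y, x))) E p.
  by apply/eqP; rewrite -addr_eq0 -addrA sumE.
have -> : (N - i)%:R * (dN + i%:R) * r x y * (f (zeta N i.+1 x y) - f eta) +
    i%:R * (dN + (N - i)%:R) * r x y * (f (zeta N i.-1 x y) - f eta) = E (x, y) + E (y, x).
  by rewrite /E /= rxy ryx sigma_xy // sigma_yx // ltnW.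
rewrite eq1 normrN.
have s1 : `|\sum_(p | (p != (x, y)) && (p != (y, x))) E p| <= \sum_(p | (p != (x, y)) && (p != (y, x))) `|E p|.
  by apply: ler_norm_sum.
have s2 : \sum_(p | (p != (x, y)) && (p != (y, x))) `|E p| <= \sum_(p | (p != (x, y)) && (p != (y, x))) N%:R * dN * r p.1 p.2.
  apply: ler_sum => p /andP[h1 h2].
  rewrite /E normrM ger0_norm ?rate_ge0 //.
  apply: (le_trans _ (rate_other _ _ (ltnW iN) h1 h2)).
  rewrite -[X in _ <= X]mulr1; apply: wM2l; [exact: rate_ge0 | exact: f_diff_le1].
have s3 : \sum_(p | (p != (x, y)) && (p != (y, x))) N%:R * dN * r p.1 p.2 <= \sum_p N%:R * dN * r p.1 p.2.
  rewrite [X in _ <= X](bigID (fun p : S * S => (p != (x, y)) && (p != (y, x)))) /= lerDl.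
  by apply: sumr_ge0 => p _; rewrite !mulr_ge0 ?ler0n // ltW.
rewrite mulr_sumr.
exact: le_trans s1 (le_trans s2 s3).
Qed.

End PartA.


Lemma stepC (R : realType) (m p d rr K Di Dm D0 : R) : 0 < m -> 0 < p -> 0 < d -> 0 < rr -> 0 <= K ->
  `|D0| <= 1 ->
  `| p*(d+m)*rr * Di - m*(d+p)*rr * Dm | <= (m+p)*d*K ->
  `|Di - D0| <= (1 + d/p) * `|Dm - D0| + d*(1 + K/rr) * (m^-1 + p^-1).
Proof.
move=> m0 p0 d0 r0 K0 D01 H.
set u := p*(d+m)*rr; set v := m*(d+p)*rr.
have u0 : 0 < u by rewrite /u !mulr_gt0 // addr_gt0.
rewrite -(ler_pM2l u0).
set X := `|Dm - D0|.
have X0 : 0 <= X by apply: normr_ge0.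
have E1 : u * `|Di - D0| <= (m+p)*d*K + v * X + rr * d * (m + p).
  have -> : u * `|Di - D0| = `| (u * Di - v * Dm) + v * (Dm - D0) + (rr * d * (m - p)) * D0 |.
    rewrite -[X in X * _ = _]ger0_norm ?ltW // -normrM; congr `|_|; rewrite /u /v; ring.
  apply: (le_trans (ler_normD _ _)); apply: lerD; last first.
    rewrite normrM; apply: (@le_trans _ _ (`|rr * d * (m - p)| * 1)).
      by rewrite ler_wpM2l ?normr_ge0.
    have rd : 0 < rr * d by rewrite mulr_gt0.
    rewrite mulr1 ler_norml; apply/andP; split; nra.
  apply: (le_trans (ler_normD _ _)); apply: lerD => //.
  rewrite normrM ger0_norm // /v !mulr_ge0 ?ltW ?addr_gt0 //.
have Wm : m + p <= (m+p)*(d+m)/m.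
  have -> : (m+p)*(d+m)/m = (m+p) + (m+p)*d/m by field; lra.
  rewrite lerDl divr_ge0 ?mulr_ge0 ?addr_ge0 ?ltW //.
set W := (m+p)*(d+m)/m.
have E2 : u * (1 + d/p) = (d+m)*rr*(p+d) by rewrite /u; field; lra.
have E3 : u * (m^-1 + p^-1) = rr * W by rewrite /u /W; field; rewrite !gt_eqF.
rewrite mulrDr mulrA E2 (mulrC (d * _)) mulrA E3.
have -> : rr * W * (d * (1 + K / rr)) = d * rr * W + d * K * W by field; lra.
have F1 : v * X <= (d+m)*rr*(p+d) * X.
  apply: ler_wpM2r => //; rewrite /v.
  have h : 0 <= rr * (p*d + d*d) by apply: mulr_ge0; [lra | nra].
  nra.
have hW : 0 <= W - (m+p) by rewrite subr_ge0.
have F2 : d * rr * (m+p) <= d * rr * W.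
  have := mulr_ge0 (ltW (mulr_gt0 d0 r0)) hW; lra.
have F3 : d * K * (m+p) <= d * K * W.
  have := mulr_ge0 (mulr_ge0 (ltW d0) K0) hW; lra.
nra.
Qed.


Lemma ind_ineq (R : realType) (M M' s t c a A : R) : 0 <= M -> 0 <= t -> 0 <= c * a -> s + t <= 1/2 -> 0 <= s ->
  M' <= (1+t)*M + c * a -> M*(1-s) <= c * A -> M' * (1 - s - t) <= c * (A + a).
Proof. move=> M0 t0 ca st s0 h1 h2.
have e1 : M' * (1 - s - t) <= ((1+t)*M + c * a) * (1 - s - t).
  by apply: ler_wpM2r => //; lra.
have e2 : 0 <= M * (t * (s + t)) by apply: mulr_ge0 => //; apply: mulr_ge0 => //; lra.
have e3 : 0 <= c * a * (s + t) by apply: mulr_ge0 => //; lra.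
nra. Qed.

Lemma idt (R : realType) (a b x y z : R) : a*(x - y) - b*(y - z) = a*(x-y) + b*(z-y).
Proof. ring. Qed.

Definition Dg {R : realType} (g : nat -> R) (k : nat) := g k.+1 - g k.

Lemma rec_form (R : realType) (N i : nat) (d rr X : R) (g : nat -> R) :
 `|(N - i.+1)%:R * (d + i.+1%:R) * rr * (g i.+2 - g i.+1) + i.+1%:R * (d + (N - i.+1)%:R) * rr * (g i.+1.-1 - g i.+1)| <= X ->
 `|(N - i.+1)%:R * (d + i.+1%:R) * rr * Dg g i.+1 - i.+1%:R * (d + (N - i.+1)%:R) * rr * Dg g i| <= X.
Proof. by rewrite /Dg /= idt. Qed.



Lemma inv_nat_ge0 (R : realType) (k : nat) : 0 <= (k%:R : R)^-1.
Proof. by rewrite invr_ge0 ler0n. Qed.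

Lemma sub_range (R : realType) (a b N : nat) : (1 <= a)%N -> (a <= b)%N -> (b <= N)%N ->
  \sum_(a <= k < b) (k%:R : R)^-1 <= \sum_(1 <= k < N) (k%:R : R)^-1.
Proof.
move=> a1 ab bN.
have h1 : 0 <= \sum_(1 <= k < a) (k%:R : R)^-1 by apply: sumr_ge0 => k _; apply: inv_nat_ge0.
have h2 : 0 <= \sum_(b <= k < N) (k%:R : R)^-1 by apply: sumr_ge0 => k _; apply: inv_nat_ge0.
rewrite (big_cat_nat a1 (leq_trans ab bN)) /= (big_cat_nat ab bN) /=; lra.
Qed.

Lemma partC (R : realType) (N : nat) (d rr K : R) (g : nat -> R) :
  (2 <= N)%N -> 0 < d -> 0 < rr -> 0 <= K -> (forall k, 0 <= g k <= 1) ->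
  (forall i, (0 < i < N)%N ->
     `| ((N-i)%:R * (d + i%:R) * rr) * (g i.+1 - g i)
        + (i%:R * (d + (N-i)%:R) * rr) * (g i.-1 - g i) | <= N%:R * d * K) ->
  `| g 1 - (N.-1)%:R / N%:R * g 0 - 1 / N%:R * g N |
    <= (4 * (1 + K/rr) + 2) * (d * \sum_(1 <= k < N) (k%:R : R)^-1).
Proof.
move=> N2 d0 r0 K0 g01 Hrec.
set H := \sum_(1 <= k < N) (k%:R : R)^-1.
have H0 : 0 <= H by apply: sumr_ge0 => k _; apply: inv_nat_ge0.
have N0 : (0 < N)%N by apply: leq_trans N2.
have NR : 0 < (N%:R : R) by rewrite ltr0n.
have eN : (N.-1)%:R = N%:R - 1 :> R.
  by rewrite -{2}(prednK N0) -natr1 addrK.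
have KR : 0 <= K / rr by rewrite divr_ge0 // ltW.
set c := d * (1 + K / rr).
have c0 : 0 <= c by apply: mulr_ge0; [exact: ltW | lra].
set T := g 1 - _ - _.
have [dHbig | dHsmall] := ltrP (1/2) (d * H).
  have T1 : `|T| <= 1.
    have := g01 0%N; have := g01 1%N; have := g01 N.
    rewrite /T eN.
    set a := (N%:R : R)^-1.
    have a0 : 0 < a by rewrite /a invr_gt0.
    have a1 : a <= 1 by rewrite /a invf_le1 // ler1n.
    have -> : (N%:R - 1) / N%:R = 1 - a by rewrite /a mulrBl divff ?gt_eqF // mul1r.
    rewrite div1r -/a.
    move=> /andP[? ?] /andP[? ?] /andP[? ?].
    have p1 : 0 <= (1 - a) * (1 - g 0%N) by apply: mulr_ge0; lra.
    have p2 : 0 <= (1 - a) * g 0%N by apply: mulr_ge0; lra.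
    have p3 : 0 <= a * (1 - g N) by apply: mulr_ge0; lra.
    have p4 : 0 <= a * g N by apply: mulr_ge0; lra.
    rewrite ler_norml; apply/andP; split; lra.
  apply: (le_trans T1).
  have : 0 <= 4 * (1 + K / rr) * (d * H).
    by apply: mulr_ge0; apply: mulr_ge0; lra.
  rewrite mulrDl; lra.
pose Bs := fun i => \sum_(N - i <= k < N) (k%:R : R)^-1.
pose As := fun i => \sum_(1 <= k < i.+1) (k%:R : R)^-1 + Bs i.
have BsH i : (i < N)%N -> Bs i <= H.
  by move=> iN; apply: sub_range => //; rewrite ?subn_gt0 ?leq_subr.
have AsH i : (i < N)%N -> As i <= 2 * H.
  move=> iN; have := BsH i iN.
  have : \sum_(1 <= k < i.+1) (k%:R : R)^-1 <= H by apply: sub_range.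
  rewrite /As; lra.
have Bs0 i : 0 <= Bs i by apply: sumr_ge0 => k _; apply: inv_nat_ge0.
have D01 : `|Dg g 0%N| <= 1.
  have := g01 0%N; have := g01 1%N; rewrite /Dg => /andP[? ?] /andP[? ?].
  rewrite ler_norml; apply/andP; split; lra.
have IND i : (i < N)%N -> `|Dg g i - Dg g 0%N| * (1 - d * Bs i) <= c * As i.
  elim: i => [_|i IH iN].
    rewrite subrr normr0 mul0r; apply: mulr_ge0 => //.
    by rewrite /As; apply: addr_ge0 => //; apply: sumr_ge0 => k _; apply: inv_nat_ge0.
  have IH' := IH (ltnW iN).
  have m0 : 0 < (i.+1%:R : R) by rewrite ltr0n.
  have p0 : 0 < ((N - i.+1)%:R : R) by rewrite ltr0n subn_gt0.
  have mp : (i.+1%:R : R) + (N - i.+1)%:R = N%:R by rewrite -natrD subnKC // ltnW.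
  have step := @stepC R _ _ d rr K (Dg g i.+1) (Dg g i) (Dg g 0%N) m0 p0 d0 r0 K0 D01.
  rewrite mp in step.
  have {step} step := step (@rec_form R N i d rr _ g (Hrec i.+1 iN)).
  have eB : Bs i.+1 = ((N - i.+1)%:R : R)^-1 + Bs i.
    rewrite /Bs big_ltn; last by rewrite ltn_subrL N0.
    by rewrite subnSK // ltnW.
  have eA : As i.+1 = As i + ((i.+1%:R : R)^-1 + ((N - i.+1)%:R : R)^-1).
    rewrite /As eB big_nat_recr //=.
    by rewrite -!addrA; congr (_ + _); rewrite (addrC (Bs i)) addrA.
  rewrite eB eA.
  have -> : 1 - d * (((N - i.+1)%:R : R)^-1 + Bs i) = 1 - d * Bs i - d / (N - i.+1)%:R.
    by rewrite mulrDr; lra.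
  apply: (@ind_ineq R `|Dg g i - Dg g 0%N| _ (d * Bs i) (d / (N - i.+1)%:R) c _ (As i) _ _ _ _ _ step IH').
  - by rewrite normr_ge0.
  - by rewrite divr_ge0 // ltW.
  - by rewrite mulr_ge0 // addr_ge0 // invr_ge0 ltW.
  - have := BsH i.+1 iN; rewrite eB => h.
    have : d * (((N - i.+1)%:R : R)^-1 + Bs i) <= d * H by rewrite ler_wpM2l // ltW.
    rewrite mulrDr; lra.
  - by rewrite mulr_ge0 // ltW.
have Mb i : (i < N)%N -> `|Dg g i - Dg g 0%N| <= 4 * c * H.
  move=> iN; have h1 := IND i iN; have h2 := AsH i iN.
  have h3 : d * Bs i <= d * H by apply: wM2l; [exact: ltW | exact: BsH].
  have h4 : 0 <= `|Dg g i - Dg g 0%N| * (1/2 - d * Bs i).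
    by apply: mulr_ge0 => //; lra.
  have h5 : c * As i <= c * (2 * H) by apply: wM2l.
  nra.
have eT : T = (N%:R)^-1 * \sum_(0 <= i < N) (Dg g 0%N - Dg g i).
  rewrite sumrB sumr_const_nat subn0 telescope_sumr // -mulr_natr /T eN /Dg.
  by field; rewrite gt_eqF.
rewrite eT normrM ger0_norm ?invr_ge0 ?ler0n //.
have : \sum_(0 <= i < N) `|Dg g 0%N - Dg g i| <= \sum_(0 <= i < N) (4 * c * H).
  apply: ler_sum_nat => i /andP[_ iN]; rewrite distrC; exact: Mb.
rewrite sumr_const_nat subn0 -[_ *+ N]mulr_natr => h.
have h' : `|\sum_(0 <= i < N) (Dg g 0%N - Dg g i)| <= 4 * c * H * N%:R.
  by apply: le_trans h; apply: ler_norm_sum.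
have -> : (4 * (1 + K / rr) + 2) * (d * H) = 4 * c * H + 2 * d * H by rewrite /c; ring.
have h6 : 0 <= 2 * d * H by rewrite !mulr_ge0 // ltW.
rewrite -(ler_pM2l NR) mulrA divff ?gt_eqF // mul1r.
nra.
Qed.


Lemma npos (R : realType) (n : nat) : ((n.+1)%:R : R) \in Num.pos.
Proof. by rewrite qualifE /= ltr0n. Qed.

Lemma harm_ln (R : realType) (n : nat) :
  \sum_(1 <= k < n.+2) (k%:R : R)^-1 <= 1 + ln (n.+1)%:R.
Proof.
elim: n => [|n IH].
  by rewrite big_nat1 ln1 invr1 addr0.
rewrite big_nat_recr //=.
suff : ((n.+2)%:R : R)^-1 <= ln (n.+2)%:R - ln (n.+1)%:R.
  move=> h; apply: (le_trans (lerD IH (lexx _))).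
  by rewrite -addrA lerD2l addrC -lerBrDr.
have h := @le_ln1Dx R (- ((n.+2)%:R : R)^-1).
have : -1 < - ((n.+2)%:R : R)^-1.
  rewrite ltrN2 invf_lt1 ?ltr0n // ltr1n //.
move=> /h.
have -> : 1 - ((n.+2)%:R : R)^-1 = (n.+1)%:R / (n.+2)%:R.
  rewrite -[(n.+2)%:R]natr1; field.
  have hn : 0 <= (n%:R : R) by rewrite ler0n.
  rewrite gt_eqF //; lra.
rewrite (ln_div (npos R n) (npos R n.+1)).
rewrite -[_ <= - _]lerN2 opprK opprB. done.
Qed.

Lemma H_le_ln (R : realType) (N : nat) : (2 <= N)%N ->
  \sum_(1 <= k < N) (k%:R : R)^-1 <= (1 + (ln (2%:R : R))^-1) * ln (N%:R : R).
Proof.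
case: N => [|[|n]] // _.
have h := harm_ln R n.
have m1 : ln ((n.+1)%:R : R) <= ln (n.+2)%:R.
  by rewrite ler_ln ?npos // ler_nat.
have l20 : 0 < ln (2%:R : R) by apply: ln_gt0; rewrite ltr1n.
have l2 : ln (2%:R : R) <= ln (n.+2)%:R.
  by rewrite ler_ln ?npos // ler_nat.
have : 1 <= (ln (2%:R : R))^-1 * ln ((n.+2)%:R : R).
  rewrite -[X in X <= _](mulVf (negbT (gt_eqF l20))).
  have i0 : 0 <= (ln (2%:R : R))^-1 by rewrite invr_ge0 ltW.
  have l2' : 0 <= ln ((n.+2)%:R : R) - ln (2%:R : R) by rewrite subr_ge0.
  by rewrite -subr_ge0 -mulrBr; apply: mulr_ge0.
move=> h3.
lra.
Qed.

Theorem lemma4p10 (R : realType) (S : finType) (r : S -> S -> R)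
  (r_ge0 : forall a b : S, 0 <= r a b) (r_diag : forall a : S, r a a = 0)
  (r_irr : irreducible r)
  (d : nat -> R) (d_pos : forall N : nat, 0 < d N) (d_to0 : d @ \oo --> 0)
  (A : {set S}) (w : S) (wA : w \in A)
  (x y : S) (xy : x != y) (rsym : r x y = r y x) (rpos : 0 < r x y) :
  exists C : R, exists N0 : nat, forall N : nat, (N0 <= N)%N ->
    `| probE0 N (d N) r A w (zeta N 1 x y)
       - (N.-1)%:R / N%:R * probE0 N (d N) r A w (xi N x)
       - 1 / N%:R * probE0 N (d N) r A w (xi N y) |
    <= C * (d N * ln N%:R).
Proof.
set K := \sum_(p : S * S) r p.1 p.2.
have K0 : 0 <= K by apply: sumr_ge0 => p _; apply: r_ge0.
exists ((4 * (1 + K / r x y) + 2) * (1 + (ln (2%:R : R))^-1)), 2%N.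
move=> N N2.
pose g := fun k => probE0 N (d N) r A w (zeta N k x y).
have gb : forall k, 0 <= g k <= 1.
  by move=> k; apply: (f_bounds R S r r_ge0 N (d N) A w (d_pos N)).
have Hrec : forall i, (0 < i < N)%N ->
   `| ((N-i)%:R * (d N + i%:R) * r x y) * (g i.+1 - g i)
      + (i%:R * (d N + (N-i)%:R) * r x y) * (g i.-1 - g i) | <= N%:R * d N * K.
  by move=> i Hi; apply: (seg_eq R S r r_ge0 N (d N) A w (d_pos N) x y xy rsym rpos i Hi).
have P := partC R N (d N) (r x y) K g N2 (d_pos N) rpos K0 gb Hrec.
have e0 : g 0%N = probE0 N (d N) r A w (xi N x) by rewrite /g zeta0.
have eN : g N = probE0 N (d N) r A w (xi N y) by rewrite /g zetaN.
rewrite -e0 -eN.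
apply: (le_trans P).
have HL := H_le_ln R N N2.
have C00 : 0 <= 4 * (1 + K / r x y) + 2.
  have : 0 <= K / r x y by rewrite divr_ge0 // ltW.
  lra.
rewrite -mulrA; apply: wM2l => //.
rewrite mulrCA; apply: wM2l; first exact: ltW.
exact: HL.
Qed.
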